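(* Let $\mathbf{B}$ be a binomial ring and let $x$ be an element of a divided power algebra over $\mathbf{B}$. Then for all $a\in\mathbf{B}$ and all positive integers $m$, $$a^m x^{[m]}=\sum_{k=1}^\infty\binom ak\sum_{\substack{g_1+\cdots+g_k=m\\ g_i\in\mathbb Z^+}}x^{[g_1]}\cdots x^{[g_k]}.$$
   Context: A binomial ring is a commutative unital ring, torsion-free as an abelian group, such that $\binom ak=a(a-1)\cdots(a-k+1)/k!\in\mathbf{B}$ for all $a\in\mathbf{B}$, $k\ge0$. In a divided power algebra, $x^{[g]}$ denotes the $g$-th divided power of $x$ (morally $x^g/g!$), satisfying $x^{[i]}x^{[j]}=\binom{i+j}ix^{[i+j]}$. The sum over $k$ is finite since the inner sum is empty for $k>m$. *)

(* Defs.v *)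
From HB Require Import structures.
From mathcomp Require Import all_boot all_order all_algebra.
Set Implicit Arguments. Unset Strict Implicit. Unset Printing Implicit Defensive.
Import Order.TTheory GRing.Theory Num.Theory.
Local Open Scope ring_scope.

Definition falling (B : comRingType) (a : B) (k : nat) : B :=
  \prod_(i < k) (a - i%:R).

(* B is a binomial ring and bin is its binomial-coefficient map:
   B is torsion-free as an abelian group, and bin a k = a(a-1)...(a-k+1)/k!
   (i.e. k! * bin a k = falling a k, which determines bin a k uniquely by
   torsion-freeness). *)
Record binomial_ring (B : comRingType) (bin : B -> nat -> B) : Prop := {
  binomial_torsion_free : forall (n : nat) (a : B), a *+ n.+1 = 0 -> a = 0;
  binomial_binP : forall (a : B) (k : nat), bin a k *+ k`! = falling a k
}.

Record is_ideal (A : comRingType) (I : {pred A}) : Prop := {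
  ideal0 : 0 \in I;
  idealD : forall x y, x \in I -> y \in I -> x + y \in I;
  idealM : forall (l x : A), x \in I -> l * x \in I
}.

(* (I, gam) is a divided power structure (PD ideal) on A
   (Berthelot--Ogus): gam n x = x^{[n]} for x in I. *)
Record pd_structure (A : comRingType) (I : {pred A}) (gam : nat -> A -> A)
  : Prop := {
  pd_ideal : is_ideal I;
  pd_gam0 : forall x, x \in I -> gam 0%N x = 1;
  pd_gam1 : forall x, x \in I -> gam 1%N x = x;
  pd_gamI : forall n x, x \in I -> (0 < n)%N -> gam n x \in I;
  pd_gamD : forall n x y, x \in I -> y \in I ->
      gam n (x + y) = \sum_(i < n.+1) gam i x * gam (n - i)%N y;
  pd_gamZ : forall n (l x : A), x \in I -> gam n (l * x) = l ^+ n * gam n x;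
  pd_gamM : forall i j x, x \in I ->
      gam i x * gam j x = 'C(i + j, i)%:R * gam (i + j)%N x;
  pd_gamC : forall m n x, x \in I -> (0 < n)%N ->
      gam m (gam n x) = ((m * n)`! %/ (m`! * (n`! ^ m)))%:R * gam (m * n)%N x
}.

(* Main.v *)
Require Import Defs.
From HB Require Import structures.
From mathcomp Require Import all_boot all_order all_algebra.
From mathcomp Require Import zify ring.
Import GRing.Theory.
Local Open Scope ring_scope.

Fixpoint stir (n k : nat) : nat :=
  match n with
  | 0 => (k == 0)%N
  | n'.+1 => match k with 0 => 0 | k'.+1 => (stir n' k' + k * stir n' k)%N end
  end.

Lemma stir_small n k : (n < k)%N -> stir n k = 0%N.
Proof.
elim: n k => [|n IH] [|k] //= H.
by rewrite !IH // ?muln0 // ltnW.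
Qed.

Definition Tsum k n := (\sum_(i < n) 'C(n, i.+1) * stir (n - i.+1) k)%N.

Lemma Tsum_eq n k : Tsum k n = (k.+1 * stir n k.+1)%N.
Proof.
elim: n k => [|n IH] k; first by rewrite /Tsum big_ord0 muln0.
rewrite /Tsum.
have -> : (\sum_(i < n.+1) 'C(n.+1, i.+1) * stir (n.+1 - i.+1) k =
   \sum_(i < n.+1) 'C(n, i) * stir (n - i) k +
   \sum_(i < n.+1) 'C(n, i.+1) * stir (n - i) k)%N.
  rewrite -big_split /=; apply: eq_bigr => i _.
  by rewrite subSS binS mulnDl addnC.
rewrite big_ord_recl /= bin0 subn0 mul1n.
have -> : (\sum_(i < n) 'C(n, (lift ord0 i)) * stir (n - lift ord0 i) k = Tsum k n)%N by [].
rewrite big_ord_recr /= bin_small // mul0n addn0.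
have E : (\sum_(i < n) 'C(n, i.+1) * stir (n - i) k =
    \sum_(i < n) 'C(n, i.+1) * stir (n - i.+1).+1 k)%N.
  by apply: eq_bigr => i _; rewrite subnSK.
rewrite E IH /= {E}.
case: k => [|k].
  rewrite big1 ?addn0 => [|i _]; last by rewrite /= muln0.
  by rewrite !mul1n.
have -> : (\sum_(i < n) 'C(n, i.+1) * (stir (n - i.+1) k + k.+1 * stir (n - i.+1) k.+1) = Tsum k n + k.+1 * Tsum k.+1 n)%N.
  rewrite /Tsum big_distrr -big_split /=; apply: eq_bigr => i _.
  by rewrite mulnDr mulnCA.
rewrite !IH. lia.
Qed.
Lemma falling_S (B : comRingType) (a : B) k :
  a * falling a k = falling a k.+1 + falling a k *+ k.
Proof.
rewrite /falling big_ord_recr /= -/(falling a k).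
by rewrite mulrBr mulr_natr addrNK mulrC.
Qed.

Lemma pow_stir (B : comRingType) (a : B) m :
  a ^+ m = \sum_(k < m.+1) falling a k *+ stir m k.
Proof.
elim: m => [|m IH].
  by rewrite big_ord_recl big_ord0 addr0 /falling big_ord0.
rewrite exprS IH mulr_sumr.
under eq_bigr => k _ do rewrite mulrnAr falling_S mulrnDl -mulrnA.
rewrite big_split /= [in RHS]big_ord_recl /= mulr0n add0r.
under [in RHS]eq_bigr => k _ do rewrite /bump /= add1n mulrnDr.
rewrite big_split /=; congr (_ + _).
rewrite big_ord_recl /= mul0n mulr0n add0r.
rewrite [in RHS]big_ord_recr /= stir_small // muln0 mulr0n addr0.
apply: eq_bigr => k _; by rewrite /bump /= add1n.
Qed.
Section PA.
Variable (A : comNzRingType) (g : nat -> A).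
Hypothesis g0 : g 0%N = 1.
Hypothesis gM : forall i j, g i * g j = 'C(i + j, i)%:R * g (i + j)%N.
Variable m : nat.

Definition gg (j : nat) := if j == 0%N then 0 else g j.
Definition PP : {poly A} := \sum_(j < m.+1) gg j *: 'X^j.

Lemma coefPP j : (j <= m)%N -> PP`_j = gg j.
Proof.
move=> hj; rewrite /PP coef_sum (bigD1 (Ordinal (hj : (j < m.+1)%N))) //=.
rewrite coefZ coefXn eqxx mulr1 big1 ?addr0 // => i hi.
rewrite coefZ coefXn; case: eqP => [E|]; last by rewrite mulr0.
by move: hi; rewrite -val_eqE /= E eqxx.
Qed.

Lemma powPP k n : (n <= m)%N -> (PP ^+ k)`_n = (k`! * stir n k)%:R * g n.
Proof.
elim: k n => [|k IH] n hn.
  rewrite expr0 coef1 fact0 mul1n; case: n hn => [|n] _ /=; first by rewrite g0 mulr1.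
  by rewrite mul0r.
rewrite exprS coefM big_ord_recl coefPP // /gg eqxx mul0r add0r.
have -> : \sum_(i < n) PP`_(lift ord0 i) * (PP ^+ k)`_(n - lift ord0 i) =
   \sum_(i < n) ('C(n, i.+1) * (k`! * stir (n - i.+1) k))%:R * g n.
  apply: eq_bigr => i _; rewrite /= /bump /= add1n.
  have hi : (i < n)%N := ltn_ord i.
  rewrite coefPP; last by apply: leq_trans hn.
  rewrite /gg /= IH; last by apply: leq_trans (leq_subr _ _) hn.
  rewrite mulrCA gM subnKC // natrM mulrA [_ * 'C(_,_)%:R]mulrC mulrA.
  by rewrite !natrM !mulrA.
rewrite -big_distrl /= -natr_sum.
have -> : (\sum_(i < n) 'C(n, i.+1) * (k`! * stir (n - i.+1) k) = k`! * Tsum k n)%N.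
  by rewrite /Tsum big_distrr /=; apply: eq_bigr => i _; rewrite mulnCA.
by rewrite Tsum_eq factS mulnA [(k`! * _)%N]mulnC.
Qed.
End PA.
Lemma prod_monoms (A : comNzRingType) (I : Type) (r : seq I) (c : I -> A) (e : I -> nat) :
  \prod_(i <- r) (c i *: 'X^(e i)) = (\prod_(i <- r) c i) *: 'X^(\sum_(i <- r) e i).
Proof.
elim: r => [|h r IH]; first by rewrite !big_nil scale1r expr0.
by rewrite !big_cons IH -scalerAl -scalerAr scalerA exprD.
Qed.

Lemma coefPPk (A : comNzRingType) (g : nat -> A) (m k : nat) :
  (PP _ g m ^+ k)`_m = \sum_(f : {ffun 'I_k -> 'I_m.+1}
                       | ((\sum_(i < k) (f i : nat))%N == m) && [forall i, (0 < f i)%N])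
                   \prod_(i < k) g (f i : nat).
Proof.
have -> : PP _ g m ^+ k = \prod_(i < k) PP _ g m by rewrite prodr_const card_ord.
rewrite /PP bigA_distr_bigA coef_sum [RHS]big_mkcond /=.
apply: eq_bigr => f _.
rewrite prod_monoms coefZ coefXn.
case: eqP => [Es|Ns]; last first.
  rewrite mulr0; case: eqP => // E; by rewrite E in Ns.
rewrite mulr1 -Es eqxx /=.
case: forallP => [Hp|Hn].
  apply: eq_bigr => i _; rewrite /gg; by have := Hp i; case: (f i : nat).
have [i Hi] : exists i, ~~ (0 < f i)%N.
  apply/existsP; rewrite -negb_forall; by apply/forallP.
rewrite (bigD1 i) //= /gg.
by move: Hi; rewrite lt0n negbK => /eqP ->; rewrite mul0r.
Qed.

Theorem mainTheorem20 (B : comRingType) (bin : B -> nat -> B)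
  (hB : binomial_ring bin)
  (A : comAlgType B) (I : {pred A}) (gam : nat -> A -> A)
  (hPD : pd_structure I gam)
  (x : A) (hx : x \in I) (a : B) (m : nat) (hm : (0 < m)%N) :
  a ^+ m *: gam m x =
  \sum_(1 <= k < m.+1)
     bin a k *: \sum_(g : {ffun 'I_k -> 'I_m.+1}
                       | ((\sum_(i < k) (g i : nat))%N == m) && [forall i, (0 < g i)%N])
                   \prod_(i < k) gam (g i : nat) x.
Proof.
have g0 : gam 0%N x = 1 by apply: (pd_gam0 hPD).
have gM : forall i j, gam i x * gam j x = 'C(i + j, i)%:R * gam (i + j)%N x.
  by move=> i j; apply: (pd_gamM hPD).
under eq_bigr => k _ do
  rewrite -(coefPPk _ (fun n => gam n x)) (powPP _ _ g0 gM) // mulr_natl -scalerMnr scalerMnl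
          mulrnA (binomial_binP hB).
rewrite -scaler_suml; congr (_ *: _).
rewrite pow_stir big_ord_recl /=.
case: m hm => // m' _; rewrite /= mulr0n add0r big_add1 /= big_mkord.
by apply: eq_bigr.
Qed.
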